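(* Let $0<\varepsilon<1/5$ and let $G$ be a bipartite graph on $n$ vertices with partition classes $V_1,V_2$ of equal size, such that $G$ has minimum degree at least $(1-\varepsilon)n/2$. If the edges of $G$ are coloured red and blue and this colouring is not a split colouring, then there are two vertex-disjoint connected matchings of distinct colours (one red, one blue) that together cover all but at most $4\varepsilon n$ vertices of $G$.
   Context: The edge colouring is an arbitrary red/blue assignment. For a bipartite graph with partition classes $U,V$, a red/blue edge colouring is a split colouring if there are partitions $U=A\cup B$ and $V=C\cup D$ (some of these sets may be empty) such that all edges of the graph between $A$ and $C$ and between $B$ and $D$ are blue, and all edges of the graph between $A$ and $D$ and between $B$ and $C$ are red. A monochromatic matching is called connected if all its edges lie in a single connected component of the subgraph formed by the edges of that colour. Matchings may be empty. *)

(* Defs.v *)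
From HB Require Import structures.
From mathcomp Require Import all_boot all_order all_algebra.
Set Implicit Arguments. Unset Strict Implicit. Unset Printing Implicit Defensive.
Import Order.TTheory GRing.Theory Num.Theory.

(* A red/blue edge colouring is a function
   col : U -> V -> bool ("true" = red, "false" = blue), only relevant on
   edges.  Vertices of the whole graph are elements of U + V; edges of the
   graph are pairs (u, v) : U * V with adj u v. *)

Section Bip.
Variables (U V : finType) (adj col : U -> V -> bool).

Definition degU (u : U) : nat := #|[set v | adj u v]|.
Definition degV (v : V) : nat := #|[set u | adj u v]|.

Definition colrel (c : bool) : rel (U + V) :=
  fun x y => match x, y with
             | inl u, inr v => adj u v && (col u v == c)
             | inr v, inl u => adj u v && (col u v == c)
             | _, _ => false
             end.

(* split colouring: partitions U = A ∪ B, V = C ∪ D with B = ~: A, D = ~: C *)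
Definition split_colouring : Prop :=
  exists (A : {set U}) (C : {set V}),
    forall u v, adj u v ->
      [/\ (u \in A) -> (v \in C) -> col u v = false,
          (u \notin A) -> (v \notin C) -> col u v = false,
          (u \in A) -> (v \notin C) -> col u v = true &
          (u \notin A) -> (v \in C) -> col u v = true].

Definition is_matching (M : {set U * V}) : Prop :=
  (forall e, e \in M -> adj e.1 e.2) /\
  (forall e f, e \in M -> f \in M -> (e.1 = f.1 \/ e.2 = f.2) -> e = f).

Definition connected_matching (c : bool) (M : {set U * V}) : Prop :=
  is_matching M /\
  (forall e, e \in M -> col e.1 e.2 = c) /\
  (forall e f, e \in M -> f \in M -> connect (colrel c) (inl e.1) (inl f.1)).

Definition covered (M : {set U * V}) : {set U + V} :=
  [set x | [exists e in M, (x == inl e.1) || (x == inr e.2)]].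

End Bip.

(* Main.v *)
Require Import Defs.
From HB Require Import structures.
From mathcomp Require Import all_boot all_order all_algebra.
Import Order.TTheory GRing.Theory Num.Theory.
From mathcomp Require Import zify lra.
Set Implicit Arguments. Unset Strict Implicit. Unset Printing Implicit Defensive.

Section Match.
Variables (U V : finType) (P : U -> V -> bool).

Definition matchb (M : {set U * V}) : bool :=
  [forall e in M, P e.1 e.2] &&
  [forall e in M, [forall f in M, ((e.1 == f.1) || (e.2 == f.2)) ==> (e == f)]].

Lemma matchb_P M : matchb M -> forall e, e \in M -> P e.1 e.2.
Proof. by case/andP=> /forall_inP h _. Qed.

Lemma matchb_eq M : matchb M -> forall e f, e \in M -> f \in M ->
  e.1 = f.1 \/ e.2 = f.2 -> e = f.
Proof.
case/andP=> _ /forall_inP h e f he hf o.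
move: (forall_inP (h e he) f hf) => /implyP i; apply/eqP; apply: i.
by case: o => ->; rewrite eqxx ?orbT.
Qed.

Lemma matchbI (M : {set U * V}) : (forall e, e \in M -> P e.1 e.2) ->
  (forall e f, e \in M -> f \in M -> e.1 = f.1 \/ e.2 = f.2 -> e = f) -> matchb M.
Proof.
move=> h1 h2; apply/andP; split; first by apply/forall_inP.
apply/forall_inP=> e he; apply/forall_inP=> f hf; apply/implyP=> /orP o.
by apply/eqP; apply: h2 => //; case: o => /eqP; auto.
Qed.

Definition mU (M : {set U * V}) : {set U} := [set e.1 | e in M].
Definition mV (M : {set U * V}) : {set V} := [set e.2 | e in M].

Lemma card_mU M : matchb M -> #|mU M| = #|M|.
Proof. move=> h; apply: card_in_imset => e f he hf q; apply: (matchb_eq h) => //; by left. Qed.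

Lemma card_mV M : matchb M -> #|mV M| = #|M|.
Proof. move=> h; apply: card_in_imset => e f he hf q; apply: (matchb_eq h) => //; by right. Qed.

Lemma match_sub (M M' : {set U * V}) : matchb M -> M' \subset M -> matchb M'.
Proof.
move=> h /subsetP s; apply: matchbI => [e he|e f he hf]; first exact: (matchb_P h) (s _ he).
exact: (matchb_eq h) (s _ he) (s _ hf).
Qed.

Lemma mU_add M a b z : z \in mU ((a, b) |: M) -> z = a \/ z \in mU M.
Proof.
case/imsetP=> e; rewrite !inE => /orP[/eqP -> -> | he ->]; first by left.
by right; apply: imset_f.
Qed.

Lemma mV_add M a b z : z \in mV ((a, b) |: M) -> z = b \/ z \in mV M.
Proof.
case/imsetP=> e; rewrite !inE => /orP[/eqP -> -> | he ->]; first by left.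
by right; apply: imset_f.
Qed.

Lemma match_add M a b : matchb M -> P a b -> a \notin mU M -> b \notin mV M ->
  matchb ((a, b) |: M) /\ #|(a, b) |: M| = #|M|.+1.
Proof.
move=> h hab ha hb; split.
  apply: matchbI => [e|e f].
    by rewrite !inE => /orP[/eqP -> //|]; exact: (matchb_P h).
  rewrite !inE => /orP[/eqP ->|he] /orP[/eqP ->|hf] //= o.
  - exfalso; case: o => q.
      by move: ha; rewrite q; case/negP; apply: imset_f.
    by move: hb; rewrite q; case/negP; apply: imset_f.
  - exfalso; case: o => q.
      by move: ha; rewrite -q; case/negP; apply: imset_f.
    by move: hb; rewrite -q; case/negP; apply: imset_f.
  - exact: (matchb_eq h).
rewrite cardsU1; case: ((a, b) \in M) /idP => //= hin.
by move: ha; case/negP; apply: (imset_f (fun e : U * V => e.1) hin).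
Qed.

Definition ismax M := matchb M /\ forall M', matchb M' -> #|M'| <= #|M|.

Lemma ismax_ex : exists M, ismax M.
Proof.
have h0 : matchb set0 by apply: matchbI => e; rewrite inE.
case: (arg_maxnP (fun M : {set U * V} => #|M|) h0) => M hM hmax.
by exists M; split => // M' /hmax.
Qed.

Lemma max_noedge M x y : ismax M -> x \notin mU M -> y \notin mV M -> ~~ P x y.
Proof.
move=> [hm hmax] hx hy; apply/negP => hp.
have [h1 h2] := match_add hm hp hx hy.
by have := hmax _ h1; rewrite h2 ltnn.
Qed.

Lemma max_nbrV M x w : ismax M -> x \notin mU M -> P x w -> w \in mV M.
Proof.
move=> hM hx hp; apply/negPn/negP => hw.
by have := max_noedge hM hx hw; rewrite hp.
Qed.

Lemma max_nbrU M y w : ismax M -> y \notin mV M -> P w y -> w \in mU M.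
Proof.
move=> hM hy hp; apply/negPn/negP => hw.
by have := max_noedge hM hw hy; rewrite hp.
Qed.

Lemma max_swap M x y : ismax M -> x \notin mU M -> y \notin mV M ->
  #|[set w | P x w]| + #|[set w | P w y]| <= #|M|.
Proof.
move=> hM hx hy; have [hm hmax] := hM.
set Nx := [set e in M | P x e.2]; set Ny := [set e in M | P e.1 y].
have h1 : #|[set w | P x w]| <= #|Nx|.
  apply: leq_trans (leq_imset_card (fun e : U * V => e.2) Nx).
  apply: subset_leq_card; apply/subsetP => w; rewrite inE => hp.
  case/imsetP: (max_nbrV hM hx hp) => e he q; subst w.
  by apply: imset_f; rewrite inE he hp.
have h2 : #|[set w | P w y]| <= #|Ny|.
  apply: leq_trans (leq_imset_card (fun e : U * V => e.1) Ny).
  apply: subset_leq_card; apply/subsetP => w; rewrite inE => hp.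
  case/imsetP: (max_nbrU hM hy hp) => e he q; subst w.
  by apply: imset_f; rewrite inE he hp.
have h3 : forall e, e \in Nx -> e \in Ny -> False.
  move=> e; rewrite !inE => /andP[he hxe] /andP[_ hey].
  set M1 := M :\ e.
  have m1 : matchb M1 by apply: match_sub hm _; apply: subsetDl.
  have c1 : #|M| = #|M1|.+1 by rewrite (cardsD1 e M) he.
  have e1 : e.1 \notin mU M1.
    apply/negP; case/imsetP=> f; rewrite !inE => /andP[hfe hf] q.
    by move: hfe; rewrite (matchb_eq hm hf he) ?eqxx //; left.
  have y1 : y \notin mV M1.
    apply/negP; case/imsetP=> f; rewrite !inE => /andP[hfe hf] q.
    by move: hy; rewrite q; case/negP; apply: imset_f.
  have [m2 c2] := match_add m1 hey e1 y1.
  set M2 := (e.1, y) |: M1.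
  have x2 : x \notin mU M2.
    apply/negP => /mU_add [q|].
      by move: hx; rewrite q; case/negP; apply: imset_f.
    case/imsetP=> f; rewrite !inE => /andP[_ hf] q.
    by move: hx; rewrite q; case/negP; apply: imset_f.
  have e2 : e.2 \notin mV M2.
    apply/negP => /mV_add [q|].
      by move: hy; rewrite -q; case/negP; apply: imset_f.
    case/imsetP=> f; rewrite !inE => /andP[hfe hf] q.
    by move: hfe; rewrite (matchb_eq hm hf he) ?eqxx //; right.
  have [m3 c3] := match_add m2 hxe x2 e2.
  by have := hmax _ m3; rewrite c3 c2 c1 ltnn.
have h4 : #|Nx :|: Ny| <= #|M|.
  by apply: subset_leq_card; apply/subsetP => e; rewrite !inE => /orP[] /andP[].
have := cardsUI Nx Ny.
have -> : Nx :&: Ny = set0.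
  by apply/setP => e; rewrite in_set0; apply/negP => /setIP[a b]; apply: (h3 e a b).
rewrite cards0; lia.
Qed.

End Match.


Lemma cardI_lb (T : finType) (A B : {set T}) : #|A| + #|B| <= #|A :&: B| + #|T|.
Proof. have := cardsUI A B; have := max_card (A :|: B); lia. Qed.

Lemma meet_ex (T : finType) (A B : {set T}) : #|T| < #|A| + #|B| ->
  exists x, x \in A /\ x \in B.
Proof.
move=> h; have := cardI_lb A B => h2.
have : 0 < #|A :&: B| by lia.
by case/card_gt0P=> x; rewrite inE => /andP[hA hB]; exists x.
Qed.

Lemma card_disjU (T : finType) (A B : {set T}) :
  (forall x, x \in A -> x \in B -> False) -> #|A :|: B| = #|A| + #|B|.
Proof.
move=> h; rewrite -cardsUI.
suff -> : A :&: B = set0 by rewrite cards0 addn0.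
by apply/setP=> x; rewrite !inE; apply/negP => /andP[h1 h2]; exact: h h1 h2.
Qed.

Section Main.
Variables (U V : finType) (adj col : U -> V -> bool).
Local Notation T := (U + V)%type.
Local Notation crel := (colrel adj col).

Lemma crel_sym c : symmetric (crel c).
Proof. by case=> x; case=> y. Qed.

Definition comp c (z : T) : {set T} := [set w | connect (crel c) z w].

Lemma comp_self c z : z \in comp c z.
Proof. by rewrite inE connect0. Qed.

Lemma comp_eq c z w : w \in comp c z -> comp c w = comp c z.
Proof.
rewrite inE => h; apply/setP=> y; rewrite !inE; apply/idP/idP => h2.
  exact: connect_trans h h2.
rewrite (sym_connect_sym (crel_sym c)) in h.
exact: connect_trans h h2.
Qed.

Lemma comp_edge c z u v : adj u v -> col u v = c ->
  (inl u \in comp c z) = (inr v \in comp c z).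
Proof.
move=> a cl; rewrite !inE; apply/idP/idP => h.
  apply: connect_trans h (connect1 _); by rewrite /= a cl eqxx.
apply: connect_trans h (connect1 _); by rewrite /= a cl eqxx.
Qed.

Lemma comp_edge' z u v : adj u v ->
  (inl u \in comp (col u v) z) = (inr v \in comp (col u v) z).
Proof. by move=> a; apply: comp_edge. Qed.

Lemma edge_in u v : adj u v -> inr v \in comp (col u v) (inl u).
Proof. by move=> a; rewrite -comp_edge' // comp_self. Qed.

Lemma comp_disj c z w y : y \in comp c z -> y \in comp c w -> comp c z = comp c w.
Proof. by move=> h1 h2; rewrite -(comp_eq h1) (comp_eq h2). Qed.


Definition Kof (z : bool -> T) c := comp c (z c).
Definition Hr (z : bool -> T) u v := adj u v && (inl u \in Kof z (col u v)).
Definition cdegU c u := #|[set v | adj u v && (col u v == c)]|.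
Definition cdegV c v := #|[set u | adj u v && (col u v == c)]|.
Definition degHU z u := #|[set v | Hr z u v]|.
Definition degHV z v := #|[set u | Hr z u v]|.

Lemma deg_splitU c u : degU adj u = cdegU c u + cdegU (~~c) u.
Proof.
rewrite /degU /cdegU -(cardsID [set v | col u v == c] [set v | adj u v]).
congr (_ + _); apply: eq_card => v; rewrite !inE;
  by case: (adj u v); case: (col u v); case: c.
Qed.

Lemma deg_splitV c v : degV adj v = cdegV c v + cdegV (~~c) v.
Proof.
rewrite /degV /cdegV -(cardsID [set u | col u v == c] [set u | adj u v]).
congr (_ + _); apply: eq_card => u; rewrite !inE;
  by case: (adj u v); case: (col u v); case: c.
Qed.

Lemma fullU z u : inl u \in Kof z true -> inl u \in Kof z false -> degHU z u = degU adj u.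
Proof.
move=> h1 h2; rewrite /degHU /degU; apply: eq_card => v; rewrite !inE /Hr.
by case: (adj u v) => //=; case: (col u v).
Qed.

Lemma fullV z v : inr v \in Kof z true -> inr v \in Kof z false -> degHV z v = degV adj v.
Proof.
move=> h1 h2; rewrite /degHV /degV; apply: eq_card => u; rewrite !inE /Hr.
case a: (adj u v) => //=; rewrite /Kof comp_edge' //.
by case: (col u v).
Qed.

Lemma partU z c u : inl u \in Kof z c -> inl u \notin Kof z (~~c) -> degHU z u = cdegU c u.
Proof.
move=> h1 h2; rewrite /degHU /cdegU; apply: eq_card => v; rewrite !inE /Hr.
case: (adj u v) => //=; move: h1 h2.
by case: (col u v); case: c => /= p1 /negbTE p2; rewrite ?p1 ?p2.
Qed.

Lemma partV z c v : inr v \in Kof z c -> inr v \notin Kof z (~~c) -> degHV z v = cdegV c v.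
Proof.
move=> h1 h2; rewrite /degHV /cdegV; apply: eq_card => u; rewrite !inE /Hr.
case a: (adj u v) => //=; rewrite /Kof comp_edge' //; move: h1 h2; rewrite /Kof.
by case: (col u v); case: c => /= p1 /negbTE p2; rewrite ?p1 ?p2.
Qed.

Lemma bigcontra z M x y k f : ismax (Hr z) M -> x \notin mU M -> y \notin mV M ->
  (k - f <= degHU z x \/ k - f <= degHV z y) -> #|M| + 4 * f < k -> False.
Proof.
move=> hM hx hy o h; have := max_swap hM hx hy; rewrite -/(degHU z x) -/(degHV z y).
case: o; lia.
Qed.


End Main.


Section Cases.
Variables (U V : finType) (adj col : U -> V -> bool).
Local Notation T := (U + V)%type.
Local Notation Kof := (Kof adj col).
Local Notation Hr := (Hr adj col).
Local Notation comp := (comp adj col).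


Lemma card_unmU z (M : {set U * V}) k : #|U| = k -> matchb (Hr z) M -> #|~: mU M| = k - #|M|.
Proof. move=> hk hm; have := cardsC (mU M); rewrite (card_mU hm) hk; lia. Qed.

Lemma card_unmV z (M : {set U * V}) k : #|V| = k -> matchb (Hr z) M -> #|~: mV M| = k - #|M|.
Proof. move=> hk hm; have := cardsC (mV M); rewrite (card_mV hm) hk; lia. Qed.

Lemma caseI_U z k f M : #|U| = k -> #|V| = k ->
  (forall u, k - f <= degU adj u) ->
  #|[set u | ~~ ((inl u \in Kof z true) && (inl u \in Kof z false))]| <= 3 * f ->
  ismax (Hr z) M -> k - #|M| <= 4 * f.
Proof.
move=> hU hV hd hn hM; have [hm _] := hM.
rewrite leqNgt; apply/negP => hlt.
set F := [set u | (inl u \in Kof z true) && (inl u \in Kof z false)].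
have cF : #|F| + #|[set u | ~~ ((inl u \in Kof z true) && (inl u \in Kof z false))]| = k.
  rewrite -hU -(cardsC F); congr (_ + _); apply: eq_card => u; by rewrite !inE.
have [x [hx hxF]] : exists x, x \in ~: mU M /\ x \in F.
  apply: meet_ex; rewrite (card_unmU hU hm); lia.
have : 0 < #|~: mV M| by rewrite (card_unmV hV hm); lia.
case/card_gt0P => y hy.
move: hx hy hxF; rewrite /F !in_setC inE => hx hy /andP[h1 h2].
apply: (bigcontra (k := k) (f := f) hM hx hy); last lia.
by left; rewrite fullU //; apply: hd.
Qed.

Lemma caseI_V z k f M : #|U| = k -> #|V| = k ->
  (forall v, k - f <= degV adj v) ->
  #|[set v | ~~ ((inr v \in Kof z true) && (inr v \in Kof z false))]| <= 3 * f ->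
  ismax (Hr z) M -> k - #|M| <= 4 * f.
Proof.
move=> hU hV hd hn hM; have [hm _] := hM.
rewrite leqNgt; apply/negP => hlt.
set F := [set v | (inr v \in Kof z true) && (inr v \in Kof z false)].
have cF : #|F| + #|[set v | ~~ ((inr v \in Kof z true) && (inr v \in Kof z false))]| = k.
  rewrite -hV -(cardsC F); congr (_ + _); apply: eq_card => u; by rewrite !inE.
have [y [hy hyF]] : exists y, y \in ~: mV M /\ y \in F.
  apply: meet_ex; rewrite (card_unmV hV hm); lia.
have : 0 < #|~: mU M| by rewrite (card_unmU hU hm); lia.
case/card_gt0P => x hx.
move: hx hy hyF; rewrite /F !in_setC inE => hx hy /andP[h1 h2].
apply: (bigcontra (k := k) (f := f) hM hx hy); last lia.
by right; rewrite fullV //; apply: hd.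
Qed.


Lemma span_case z c k f M : #|U| = k -> #|V| = k ->
  (forall u, k - f <= degU adj u) -> (forall v, k - f <= degV adj v) ->
  (forall w, #|comp (~~c) w| <= #|Kof z (~~c)|) ->
  #|[set u | inl u \notin Kof z c]| <= 2 * f ->
  #|[set v | inr v \notin Kof z c]| <= 2 * f ->
  ismax (Hr z) M -> k - #|M| <= 4 * f.
Proof.
move=> hU hV hdU hdV hmax hcU hcV hM; have [hm _] := hM.
rewrite leqNgt; apply/negP => hlt.
set CU := [set u | inl u \in Kof z c].
set CV := [set v | inr v \in Kof z c].
have cU : #|CU| + #|[set u | inl u \notin Kof z c]| = k.
  rewrite -hU -(cardsC CU); congr (_ + _); apply: eq_card => u; by rewrite !inE.
have cV : #|CV| + #|[set v | inr v \notin Kof z c]| = k.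
  rewrite -hV -(cardsC CV); congr (_ + _); apply: eq_card => u; by rewrite !inE.
have [x [hx hxC]] : exists x, x \in ~: mU M /\ x \in CU.
  apply: meet_ex; rewrite (card_unmU hU hm); lia.
move: hx hxC; rewrite /CU in_setC inE => hx hxC.
have full2 : forall (b : bool) (w : T), w \in Kof z c -> w \in Kof z (~~ c) -> w \in Kof z b.
  move=> b w h1 h2; have : b = c \/ b = ~~ c by case: b; case: (c); auto.
  by case=> ->.
have hxD : inl x \notin Kof z (~~c).
  apply/negP => hxD.
  have : 0 < #|~: mV M| by rewrite (card_unmV hV hm); lia.
  case/card_gt0P => y0; rewrite in_setC => hy0.
  apply: (bigcontra (k := k) (f := f) hM hx hy0); last lia.
  by left; rewrite fullU; [apply: hdU|apply: full2 hxC hxD|apply: full2 hxC hxD].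
have hYC : #|~: mV M :&: CV| > 2 * f.
  have := cardI_lb (~: mV M) CV; rewrite (card_unmV hV hm) hV; lia.
have [y [hxy hy]] : exists y, y \in [set v | adj x v] /\ y \in ~: mV M :&: CV.
  apply: meet_ex; have := hdU x; rewrite /degU hV; lia.
move: hxy hy; rewrite inE => hxy /setIP[]; rewrite in_setC /CV inE => hy hyC.
have hyD : inr y \notin Kof z (~~c).
  apply/negP => hyD.
  apply: (bigcontra (k := k) (f := f) hM hx hy); last lia.
  by right; rewrite fullV; [apply: hdV|apply: full2 hyC hyD|apply: full2 hyC hyD].
have hcol : col x y = ~~ c.
  have neg_eq : forall a b : bool, a != b -> a = ~~ b by do 2!case.
  apply: neg_eq; apply/negP => /eqP e.
  by have := max_noedge hM hx hy; rewrite /Hr hxy e hxC.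
have hsw := max_swap hM hx hy; rewrite -/(degHU adj col z x) -/(degHV adj col z y) in hsw.
rewrite (partU hxC hxD) (partV hyC hyD) in hsw.
have ds1 := deg_splitU adj col c x; have ds2 := deg_splitV adj col c y.
have dx := hdU x; have dy := hdV y.
set B1 := comp (~~c) (inl x).
set S1 := [set inr v | v in [set v | adj x v && (col x v == ~~c)]] : {set T}.
set S2 := [set inl u | u in [set u | adj u y && (col u y == ~~c)]] : {set T}.
have hS12 : #|S1 :|: S2| = cdegU adj col (~~c) x + cdegV adj col (~~c) y.
  rewrite card_disjU; last first.
    by move=> w /imsetP [a _ ->] /imsetP [b _].
  by rewrite !card_imset //; move=> a b [].
have hB1 : S1 :|: S2 \subset B1.
  apply/subsetP => w; rewrite inE => /orP[] /imsetP [a]; rewrite inE => /andP[ha /eqP hca] ->.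
    by rewrite /B1 -hca edge_in.
  have hyB : inr y \in B1 by rewrite /B1 -hcol edge_in.
  by move: hyB; rewrite /B1 -hca comp_edge' //.
have cB1 := subset_leq_card hB1.
have hDB := hmax (inl x).
have disj : forall w, w \in Kof z (~~c) -> w \in B1 -> False.
  move=> w h1 h2; have := comp_disj h1 h2 => q.
  by move: hxD; rewrite /Kof q comp_self.
have := card_disjU disj; have := max_card (Kof z (~~c) :|: B1); rewrite card_sum hU hV.
rewrite -/B1 in hDB; lia.
Qed.

End Cases.


Section Witness.
Variables (U V : finType) (adj col : U -> V -> bool).
Local Notation T := (U + V)%type.
Local Notation comp := (comp adj col).

Lemma path3 c u v u' v' : adj u v' -> col u v' = c -> adj u' v' -> col u' v' = c ->
  adj u' v -> col u' v = c -> inr v \in comp c (inl u).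
Proof.
move=> a1 c1 a2 c2 a3 c3; rewrite inE.
apply: (connect_trans (y := inr v')); first by apply: connect1; rewrite /= a1 c1 eqxx.
apply: (connect_trans (y := inl u')); first by apply: connect1; rewrite /= a2 c2 eqxx.
by apply: connect1; rewrite /= a3 c3 eqxx.
Qed.

Lemma odd_edge p q p' q' : adj p q -> adj p q' -> adj p' q' -> adj p' q ->
  col p q' = ~~ col p q -> col p' q' = ~~ col p q -> col p' q = ~~ col p q ->
  inr q \in comp true (inl p) /\ inr q \in comp false (inl p).
Proof.
move=> a1 a2 a3 a4 c2 c3 c4.
have h1 := edge_in col a1.
have h2 := path3 a2 c2 a3 c3 a4 c4.
by move: h1 h2; case: (col p q).
Qed.

Definition nowit := forall u v, adj u v ->
  ~ (inr v \in comp true (inl u) /\ inr v \in comp false (inl u)).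

Lemma even4 : nowit -> forall u u' v v', adj u v -> adj u v' -> adj u' v -> adj u' v' ->
  col u v (+) col u v' (+) col u' v (+) col u' v' = false.
Proof.
move=> H u u' v v' a1 a2 a3 a4.
case e1: (col u v); case e2: (col u v'); case e3: (col u' v); case e4: (col u' v') => //=; exfalso.
all: try (by apply: (H u v a1); apply: (odd_edge (p' := u') (q' := v')); rewrite ?e1 ?e2 ?e3 ?e4).
all: try (by apply: (H u v' a2); apply: (odd_edge (p' := u') (q' := v)); rewrite ?e1 ?e2 ?e3 ?e4).
all: try (by apply: (H u' v a3); apply: (odd_edge (p' := u) (q' := v')); rewrite ?e1 ?e2 ?e3 ?e4).
all: try (by apply: (H u' v' a4); apply: (odd_edge (p' := u) (q' := v)); rewrite ?e1 ?e2 ?e3 ?e4).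
Qed.


Lemma common3 k f (u1 u2 u3 : U) : #|V| = k -> (forall u, k - f <= degU adj u) -> 3 * f < k ->
  exists t, [/\ adj u1 t, adj u2 t & adj u3 t].
Proof.
move=> hV hd hf.
have h1 := hd u1; have h2 := hd u2; have h3 := hd u3; rewrite /degU in h1 h2 h3.
have := cardI_lb [set v | adj u1 v] [set v | adj u2 v]; rewrite hV => h12.
have [t [ht1 ht2]] : exists t, t \in [set v | adj u1 v] :&: [set v | adj u2 v] /\ t \in [set v | adj u3 v].
  apply: meet_ex; rewrite hV; lia.
by move: ht1 ht2; rewrite !inE => /andP[a b] c; exists t.
Qed.

Lemma even_split k f : #|U| = k -> #|V| = k -> (forall u, k - f <= degU adj u) ->
  3 * f < k -> nowit -> split_colouring adj col.
Proof.
move=> hU hV hd hf H; have ev := even4 H.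
have : 0 < #|[set: U]| by rewrite cardsT; lia.
case/card_gt0P => u0 _.
set A := [set u | if [pick w | adj u0 w && adj u w] is Some w then col u w == col u0 w else true].
have hA : forall u t, adj u0 t -> adj u t -> (u \in A) = (col u t == col u0 t).
  move=> u t a1 a2; rewrite inE; case: pickP => [w /andP[b1 b2] | hn].
    have := ev u0 u w t b1 a1 b2 a2.
    by case: (col u0 w); case: (col u0 t); case: (col u w); case: (col u t).
  by have := hn t; rewrite a1 a2.
set C := [set v | if [pick u | adj u v] is Some u then (u \in A) != col u v else false].
have cons : forall u u' v, adj u v -> adj u' v -> ((u \in A) != col u v) = ((u' \in A) != col u' v).
  move=> u u' v a1 a2.
  have [t [t0 t1 t2]] := common3 u0 u u' hV hd hf.
  rewrite (hA u t t0 t1) (hA u' t t0 t2).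
  have := ev u u' t v t1 a1 t2 a2.
  by case: (col u0 t); case: (col u t); case: (col u v); case: (col u' t); case: (col u' v).
have hC : forall u v, adj u v -> (v \in C) = ((u \in A) != col u v).
  move=> u v a; rewrite inE; case: pickP => [u' a' | hn]; first exact: cons.
  by have := hn u; rewrite a.
exists A, C => u v a; rewrite (hC u v a).
by case: (u \in A); case: (col u v).
Qed.

End Witness.


Lemma card3 (T : finType) (A B C : {set T}) : #|A :|: B :|: C| <= #|A| + #|B| + #|C|.
Proof. have := cardsUI (A :|: B) C; have := cardsUI A B; lia. Qed.

Section Core.
Variables (U V : finType) (adj col : U -> V -> bool).
Local Notation T := (U + V)%type.
Local Notation Kof := (Kof adj col).
Local Notation Hr := (Hr adj col).
Local Notation comp := (comp adj col).

Lemma nonadjV k f u (S : {set V}) : #|V| = k -> k - f <= degU adj u ->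
  (forall w, w \in S -> ~~ adj u w) -> #|S| <= f.
Proof.
move=> hV hd hS; rewrite /degU in hd.
have := card_disjU (A := S) (B := [set w | adj u w]).
have := max_card (S :|: [set w | adj u w]); rewrite hV.
suff h : forall x, x \in S -> x \in [set w | adj u w] -> False.
  by move=> h1 /(_ h); lia.
by move=> x /hS; rewrite inE => /negbTE ->.
Qed.

Lemma nonadjU k f v (S : {set U}) : #|U| = k -> k - f <= degV adj v ->
  (forall w, w \in S -> ~~ adj w v) -> #|S| <= f.
Proof.
move=> hU hd hS; rewrite /degV in hd.
have := card_disjU (A := S) (B := [set w | adj w v]).
have := max_card (S :|: [set w | adj w v]); rewrite hU.
suff h : forall x, x \in S -> x \in [set w | adj w v] -> False.
  by move=> h1 /(_ h); lia.
by move=> x /hS; rewrite inE => /negbTE ->.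
Qed.

Lemma core k f : #|U| = k -> #|V| = k ->
  (forall u, k - f <= degU adj u) -> (forall v, k - f <= degV adj v) ->
  5 * f < k -> ~ split_colouring adj col ->
  exists z : bool -> T, forall M, ismax (Hr z) M -> k - #|M| <= 4 * f.
Proof.
move=> hU hV hdU hdV hf hns.
case: (boolP [exists u, exists v, [&& adj u v, inr v \in comp true (inl u) & inr v \in comp false (inl u)]]); last first.
  move=> hn; exfalso; apply: hns; apply: (even_split hU hV hdU) => //; first lia.
  move=> u v a [h1 h2]; move/negP: hn; apply.
  by apply/existsP; exists u; apply/existsP; exists v; rewrite a h1 h2.
case/existsP => us /existsP [vs] /and3P [avs hvt hvf].
set z0 := inl us : T.
set C0 := comp true z0; set D0 := comp false z0.
have huC : z0 \in C0 by apply: comp_self.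
have huD : z0 \in D0 by apply: comp_self.
set U10 := [set u | (inl u \in C0) && (inl u \notin D0)].
set U01 := [set u | (inl u \notin C0) && (inl u \in D0)].
set U00 := [set u | (inl u \notin C0) && (inl u \notin D0)].
set V10 := [set v | (inr v \in C0) && (inr v \notin D0)].
set V01 := [set v | (inr v \notin C0) && (inr v \in D0)].
set V00 := [set v | (inr v \notin C0) && (inr v \notin D0)].
have inb : forall (c : bool) (w : T), w \in comp c z0 -> (w \in C0) || (w \in D0).
  by move=> c w; case: c => ->; rewrite ?orbT.
have cU00 : #|U00| <= f.
  apply: (nonadjU hU (hdV vs)) => u; rewrite inE; apply: contraTN => a.
  have : inl u \in comp (col u vs) z0.
    rewrite comp_edge' //; move: hvt hvf; rewrite -/z0.
    by case: (col u vs).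
  by move/inb; rewrite negb_and !negbK.
have cV00 : #|V00| <= f.
  apply: (nonadjV hV (hdU us)) => v; rewrite inE; apply: contraTN => a.
  have : inr v \in comp (col us v) z0 by rewrite /z0 edge_in.
  by move/inb; rewrite negb_and !negbK.
have n1 : forall u v, u \in U10 -> v \in V01 -> ~~ adj u v.
  move=> u v; rewrite !inE => /andP[a1 a2] /andP[b1 b2]; apply/negP => a.
  have := comp_edge' col z0 a; rewrite !inE; case: (col u v).
    by rewrite a1 (negbTE b1).
  by rewrite b2 (negbTE a2).
have n2 : forall u v, u \in U01 -> v \in V10 -> ~~ adj u v.
  move=> u v; rewrite !inE => /andP[a1 a2] /andP[b1 b2]; apply/negP => a.
  have := comp_edge' col z0 a; rewrite !inE; case: (col u v).
    by rewrite b1 (negbTE a1).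
  by rewrite a2 (negbTE b2).
have nU10 : forall u, u \in U10 -> #|V01| <= f.
  by move=> u hu; apply: (nonadjV hV (hdU u)) => v hv; exact: n1.
have nV10 : forall v, v \in V10 -> #|U01| <= f.
  by move=> v hv; apply: (nonadjU hU (hdV v)) => u hu; exact: n2.
have nU01 : forall u, u \in U01 -> #|V10| <= f.
  by move=> u hu; apply: (nonadjV hV (hdU u)) => v hv; exact: n2.
have nV01 : forall v, v \in V01 -> #|U10| <= f.
  by move=> v hv; apply: (nonadjU hU (hdV v)) => u hu; exact: n1.
have gt0 : forall (X : finType) (S : {set X}), f < #|S| -> exists x, x \in S.
  by move=> X S h; apply/card_gt0P; lia.
have Kc : forall c, Kof (fun _ => z0) c = comp c z0 by [].
have caseIV : #|V10| <= f -> #|V01| <= f ->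
    exists z : bool -> T, forall M, ismax (Hr z) M -> k - #|M| <= 4 * f.
  move=> hv10 hv01.
  exists (fun _ => z0) => M hM; apply: (caseI_V hU hV hdV _ hM).
  apply: (@leq_trans #|V10 :|: V01 :|: V00|); last by have := card3 V10 V01 V00; lia.
  apply: subset_leq_card; apply/subsetP => u; rewrite !inE.
  by case: (connect _ _ _); case: (connect _ _ _).
have redspan : #|U01| <= f -> #|V01| <= f ->
    exists z : bool -> T, forall M, ismax (Hr z) M -> k - #|M| <= 4 * f.
  move=> h1 h2.
  have [zm _ hzm] := @arg_maxnP T z0 xpredT (fun w => #|comp false w|) isT.
  exists (fun c => if c then z0 else zm) => M hM.
  apply: (span_case (c := true) hU hV hdU hdV _ _ _ hM).
  - by move=> w; apply: hzm.
  - apply: (@leq_trans #|U01 :|: U00|); last by have := cardsUI U01 U00; lia.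
    apply: subset_leq_card; apply/subsetP => u; rewrite !inE.
    by case: (connect _ _ _); case: (connect _ _ _).
  - apply: (@leq_trans #|V01 :|: V00|); last by have := cardsUI V01 V00; lia.
    apply: subset_leq_card; apply/subsetP => u; rewrite !inE.
    by case: (connect _ _ _); case: (connect _ _ _).
have bluespan : #|U10| <= f -> #|V10| <= f ->
    exists z : bool -> T, forall M, ismax (Hr z) M -> k - #|M| <= 4 * f.
  move=> h1 h2.
  have [zm _ hzm] := @arg_maxnP T z0 xpredT (fun w => #|comp true w|) isT.
  exists (fun c => if c then zm else z0) => M hM.
  apply: (span_case (c := false) hU hV hdU hdV _ _ _ hM).
  - by move=> w; apply: hzm.
  - apply: (@leq_trans #|U10 :|: U00|); last by have := cardsUI U10 U00; lia.
    apply: subset_leq_card; apply/subsetP => u; rewrite !inE.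
    by case: (connect _ _ _); case: (connect _ _ _).
  - apply: (@leq_trans #|V10 :|: V00|); last by have := cardsUI V10 V00; lia.
    apply: subset_leq_card; apply/subsetP => u; rewrite !inE.
    by case: (connect _ _ _); case: (connect _ _ _).
case: (leqP #|U10| f) => hu10; case: (leqP #|U01| f) => hu01.
- exists (fun _ => z0) => M hM; apply: (caseI_U hU hV hdU _ hM).
  apply: (@leq_trans #|U10 :|: U01 :|: U00|); last by have := card3 U10 U01 U00; lia.
  apply: subset_leq_card; apply/subsetP => u; rewrite !inE.
  by case: (connect _ _ _); case: (connect _ _ _).
- have [u hu] := gt0 _ _ hu01; have hv10 := nU01 u hu.
  case: (leqP #|V01| f) => hv01; first exact: caseIV.
  have [v hv] := gt0 _ _ hv01; exact: bluespan (nV01 v hv) hv10.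
- have [u hu] := gt0 _ _ hu10; have hv01 := nU10 u hu.
  case: (leqP #|V10| f) => hv10; first exact: caseIV.
  have [v hv] := gt0 _ _ hv10; exact: redspan (nV10 v hv) hv01.
- have [u hu] := gt0 _ _ hu10; have hv01 := nU10 u hu.
  have [u' hu'] := gt0 _ _ hu01; have hv10 := nU01 u' hu'.
  exact: caseIV.
Qed.

End Core.


Lemma real_bound (R : realFieldType) (eps : R) (k d : nat) :
  (0 < eps)%R -> ((1 - eps) * (k + k)%:R / 2 <= d%:R)%R -> ((k - d)%:R <= eps * k%:R)%R.
Proof.
move=> he h; case: (leqP d k) => hdk.
  rewrite natrB // ; rewrite natrD in h; lra.
have -> : (k - d = 0)%N by lia.
have : (0 <= k%:R :> R)%R by apply: ler0n.
rewrite /=; nra.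
Qed.

Theorem lemma4p3 (R : realFieldType) (eps : R) (U V : finType)
    (adj col : U -> V -> bool) :
  (0 < eps)%R -> (eps < 1 / 5)%R ->
  #|U| = #|V| ->
  (forall u : U, ((1 - eps) * (#|U| + #|V|)%:R / 2 <= (degU adj u)%:R)%R) ->
  (forall v : V, ((1 - eps) * (#|U| + #|V|)%:R / 2 <= (degV adj v)%:R)%R) ->
  ~ split_colouring adj col ->
  exists MR MB : {set U * V},
    [/\ connected_matching adj col true MR,
        connected_matching adj col false MB,
        [disjoint covered MR & covered MB] &
        ((#|~: (covered MR :|: covered MB)|)%:R <= 4 * eps * (#|U| + #|V|)%:R)%R].
Proof.
move=> he1 he2 hUV hdU hdV hns.
set k := #|U|.
have hU : #|U| = k by [].
have hV : #|V| = k by rewrite -hUV.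
rewrite -/k -hUV -/k in hdU hdV *.
set f := maxn (\max_(u : U) (k - degU adj u)) (\max_(v : V) (k - degV adj v)).
have hfU : forall u, k - f <= degU adj u.
  move=> u; have := @leq_bigmax _ (fun u => k - degU adj u) u.
  have := leq_maxl (\max_(u : U) (k - degU adj u)) (\max_(v : V) (k - degV adj v)).
  rewrite -/f; lia.
have hfV : forall v, k - f <= degV adj v.
  move=> v; have := @leq_bigmax _ (fun v => k - degV adj v) v.
  have := leq_maxr (\max_(u : U) (k - degU adj u)) (\max_(v : V) (k - degV adj v)).
  rewrite -/f; lia.
have hfR : (f%:R <= eps * k%:R)%R.
  have P0 : ((0%N)%:R <= eps * k%:R :> R)%R.
    by rewrite mulr_ge0 ?ler0n // ltW.
  have Pmax : forall a b : nat, (a%:R <= eps * k%:R :> R)%R -> (b%:R <= eps * k%:R :> R)%R ->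
      ((maxn a b)%:R <= eps * k%:R :> R)%R.
    by move=> a b ha hb; rewrite /maxn; case: ifP.
  apply: (Pmax).
    by apply: (@big_ind nat (fun m : nat => (m%:R <= eps * k%:R :> R)%R) 0%N maxn); [done | exact: Pmax | move=> u _; exact: real_bound].
  by apply: (@big_ind nat (fun m : nat => (m%:R <= eps * k%:R :> R)%R) 0%N maxn); [done | exact: Pmax | move=> v _; exact: real_bound].
have kpos : 0 < k.
  rewrite lt0n; apply/negP => /eqP k0; apply: hns; exists set0, set0 => u.
  have : 0 < #|U| by apply/card_gt0P; exists u.
  by rewrite hU k0.
have hf5 : 5 * f < k.
  rewrite -(ltr_nat R) natrM.
  have : (0 < k%:R :> R)%R by rewrite ltr0n.
  move=> hk; have : (eps * k%:R < 1 / 5 * k%:R :> R)%R by rewrite ltr_pM2r.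
  lra.
have [z hz] := core hU hV hfU hfV hf5 hns.
have [M hM] := ismax_ex (Hr adj col z).
have hb := hz M hM.
have [hm _] := hM.
have sym : forall c, connect_sym (colrel adj col c) by move=> c; apply: sym_connect_sym; apply: crel_sym.
set MR := [set e in M | col e.1 e.2].
set MB := [set e in M | ~~ col e.1 e.2].
have inM : forall e, (e \in MR) || (e \in MB) = (e \in M).
  by move=> e; rewrite !inE; case: (e \in M); case: (col e.1 e.2).
have cm : forall (c : bool) (S : {set U * V}), S \subset M ->
    (forall e, e \in S -> col e.1 e.2 = c) -> connected_matching adj col c S.
  move=> c S /subsetP sub hc; split; [split|split].
  - by move=> e /sub /(matchb_P hm) /andP[].
  - by move=> e g /sub he /sub hg; apply: (matchb_eq hm).
  - exact: hc.
  - move=> e g /[dup] he /sub /(matchb_P hm) /andP[_ h1] /[dup] hg /sub /(matchb_P hm) /andP[_ h2].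
    move: h1 h2; rewrite /Kof /comp !inE (hc e he) (hc g hg) => h1 h2.
    apply: (@connect_trans _ _ (z c)); last exact: h2.
    by rewrite sym.
exists MR, MB; split.
- apply: cm; first by apply/subsetP => e; rewrite inE => /andP[].
  by move=> e; rewrite inE => /andP[_ ->].
- apply: cm; first by apply/subsetP => e; rewrite inE => /andP[].
  by move=> e; rewrite inE => /andP[_ /negbTE ->].
- rewrite -setI_eq0; apply/eqP/setP => x; rewrite in_set0; apply/negP => /setIP[].
  rewrite !inE => /exists_inP[e]; rewrite inE => /andP[heM hce] he.
  move/exists_inP => [g]; rewrite inE => /andP[hgM hcg] hg.
  have eg : e = g.
    apply: (matchb_eq hm heM hgM).
    case/orP: he => /eqP hx; case/orP: hg => /eqP; rewrite hx => -[] q; by [left | right].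
  by move: hcg; rewrite -eg hce.
- have hN : #|~: (covered MR :|: covered MB)| <= 2 * (k - #|M|).
    apply: (@leq_trans #|[set inl u | u in ~: mU M] :|: [set inr v | v in ~: mV M] : {set U + V}|).
      apply: subset_leq_card; apply/subsetP => x.
      rewrite in_setC in_setU negb_or => /andP[n1 n2].
      have cov : forall e, e \in M -> (x == inl e.1) || (x == inr e.2) -> False.
        move=> e heM hx; rewrite -(inM e) in heM.
        case/orP: heM => h.
          by move: n1; rewrite inE; case/negP; apply/exists_inP; exists e.
        by move: n2; rewrite inE; case/negP; apply/exists_inP; exists e.
      rewrite in_setU; case: x n1 n2 cov => [u|v] n1 n2 cov.
        apply/orP; left; apply: imset_f; rewrite in_setC; apply/negP => /imsetP [e heM he].
        by apply: (cov e heM); rewrite he eqxx.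
      apply/orP; right; apply: imset_f; rewrite in_setC; apply/negP => /imsetP [e heM he].
      by apply: (cov e heM); rewrite he eqxx orbT.
    apply: leq_trans (leq_card_setU _ _) _.
    rewrite !card_imset; try by move=> ? ? [].
    rewrite (card_unmU hU hm) (card_unmV hV hm); lia.
  have hN' : #|~: (covered MR :|: covered MB)| <= 8 * f by lia.
  rewrite -(ler_nat R) natrM in hN'; rewrite natrD; lra.
Qed.
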